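(* Let $d=2$. There is a constant $c_2$ depending only on the dimension such that for all $N\ge1$, $n\ge1$ and integers $0=i_0<i_1<\cdots<i_n\le N$, $$\sum_{x_1,\dots,x_n\in\mathbb{Z}^2}\ \prod_{k=1}^n p_0^2(i_k-i_{k-1},x_k-x_{k-1})\left(\sum_{x\in\mathbb{Z}^2}|x|^2p_0(N-i_n,x-x_n)\right)^2\le c_2^nN^2\prod_{k=1}^n(i_k-i_{k-1})^{-1},$$ where $x_0=0$.
   Context: $p_0(n,x)$ is the probability that simple random walk on $\mathbb{Z}^2$ started at $0$ is at $x$ at time $n$; $|\cdot|$ is the Euclidean norm. *)

(* Defs.v *)
From HB Require Import structures.
From mathcomp Require Import all_boot all_order all_algebra.
From mathcomp Require Import all_classical all_reals.
From mathcomp Require Import ereal esum.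
Set Implicit Arguments. Unset Strict Implicit. Unset Printing Implicit Defensive.
Import Order.TTheory GRing.Theory Num.Theory.
Local Open Scope ring_scope.

Definition Z2 := (int * int)%type.
Definition subZ2 (x y : Z2) : Z2 := (x.1 - y.1, x.2 - y.2).
Definition originZ2 : Z2 := (0, 0).

Definition normZ2sq (R : realType) (x : Z2) : R :=
  (x.1%:~R) ^+ 2 + (x.2%:~R) ^+ 2.

(* p0 n x : probability that simple random walk on Z^2 started at 0 is at x
   at time n (forward equation: at each step one of the 4 neighbours w.p. 1/4). *)
Fixpoint p0 (R : realType) (n : nat) (x : Z2) : R :=
  match n with
  | 0 => (x == originZ2)%:R
  | m.+1 => (p0 R m (x.1 - 1, x.2) + p0 R m (x.1 + 1, x.2)
            + p0 R m (x.1, x.2 - 1) + p0 R m (x.1, x.2 + 1)) / 4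
  end.

(* Main.v *)
Require Import Defs.
From HB Require Import structures.
From mathcomp Require Import all_boot all_order all_algebra.
From mathcomp Require Import all_classical all_reals.
From mathcomp Require Import constructive_ereal ereal esum.
From mathcomp Require Import ring lra zify.
Import Order.TTheory GRing.Theory Num.Theory.
Local Open Scope ring_scope.
Local Open Scope classical_set_scope.
Section Q.
Variable R : realType.

Fixpoint q (m : nat) (j : int) : R :=
  match m with
  | 0 => (j == 0)%:R
  | m'.+1 => (q m' (j - 1) + q m' (j + 1)) / 2
  end.

Lemma q_ge0 m j : 0 <= q m j.
Proof.
elim: m j => [|m IH] j /=; first by rewrite ler0n.
by apply: divr_ge0; [apply: addr_ge0|].
Qed.

Lemma qN m j : q m (- j) = q m j.
Proof.
elim: m j => [|m IH] j /=; first by rewrite oppr_eq0.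
rewrite (_ : - j - 1 = - (j + 1)); last by ring.
rewrite (_ : - j + 1 = - (j - 1)); last by ring.
by rewrite !IH addrC.
Qed.

Lemma q_ratio m j : q m (j + 2) * (m%:R + j%:~R + 2) = q m j * (m%:R - j%:~R).
Proof.
elim: m j => [|m IH] j /=.
  rewrite !add0r.
  case: (eqVneq j 0) => [->|j0].
    by rewrite oppr0 mulr0 /= mul0r.
  rewrite mul0r.
  case: (eqVneq (j + 2) 0) => [e|e]; last by rewrite mul0r.
  have -> : j = - (2%:R) by rewrite -(subr0 j) -e; ring.
  by rewrite intrN (_ : (2%:R : int)%:~R = 2 :> R) ?addNr ?mulr0 // pmulrn.
have h1 := IH (j + 1). have h2 := IH (j - 1).
rewrite (_ : j + 1 + 2 = j + 2 + 1) in h1; last by ring.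
rewrite (_ : j - 1 + 2 = j + 1) in h2; last by ring.
rewrite (_ : j + 2 - 1 = j + 1); last by ring.
rewrite !intrD ?intrB in h1 h2 *.
rewrite -[(m.+1)%:R]natr1.
move: h1 h2; set a := q m (j - 1); set b := q m (j + 1); set c := q m (j + 2 + 1).
move=> h1 h2.
rewrite ?mulrN1z ?mulr1z in h1 h2.
lra.
Qed.

Lemma q_step0 m : q m.+1 0 = q m 1.
Proof. rewrite /= (_ : (0:int) - 1 = - 1) // add0r qN; set a := q m 1; lra. Qed.

Lemma q_step1 m : q m.+1 1 * (m%:R + 2) = q m 0 * (m%:R + 1).
Proof.
have h := q_ratio m 0; rewrite add0r mulr0z addr0 subr0 in h.
rewrite /= subrr (_ : 1 + 1 = 2) //.
move: h; set a := q m 0; set b := q m 2 => h; lra.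
Qed.

Lemma q_inv m : q m 0 ^+ 2 * (m%:R + 1) + q m 1 ^+ 2 * (m%:R + 2) <= 1.
Proof.
elim: m => [|m IH].
  rewrite /=; lra.
rewrite q_step0 -natr1.
have h := q_step1 m.
have hM : 0 <= (m%:R : R) by rewrite ler0n.
move: IH h; set a := q m 0; set b := q m 1; set t := q m.+1 1; set M := (m%:R : R).
move=> IH h.
have ha : 0 <= a by apply: q_ge0.
have key : t ^+ 2 * (M + 1 + 2) <= a ^+ 2 * (M + 1).
  have hp : 0 < (M + 2) ^+ 2 by apply: exprn_gt0; lra.
  rewrite -(ler_pM2r hp).
  have -> : t ^+ 2 * (M + 1 + 2) * (M + 2) ^+ 2 = (t * (M + 2)) ^+ 2 * (M + 3) by ring.
  rewrite h.
  have -> : (a * (M + 1)) ^+ 2 * (M + 3) = a ^+ 2 * (M + 1) * ((M + 1) * (M + 3)) by ring.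
  apply: ler_wpM2l; first by apply: mulr_ge0; [apply: sqr_ge0|lra].
  nra.
have -> : M + 1 + 1 = M + 2 by ring.
lra.
Qed.

Lemma q_mono m (k : nat) : q m (k%:Z + 2) <= q m k%:Z.
Proof.
have h := q_ratio m k%:Z.
have hM : 0 <= (m%:R : R) by rewrite ler0n.
have hk : 0 <= ((k%:Z)%:~R : R) by rewrite ler0z.
have ha := q_ge0 m k%:Z. have hb := q_ge0 m (k%:Z + 2).
move: h; set a := q m k%:Z; set b := q m (k%:Z + 2); set K := ((k%:Z)%:~R : R);
  set M := (m%:R : R) => h.
have hp : 0 < M + K + 2 by lra.
rewrite -(ler_pM2r hp) h; apply: ler_wpM2l => //; lra.
Qed.

Lemma q_bound_nat m (k : nat) : q m k%:Z ^+ 2 <= (m.+1%:R)^-1.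
Proof.
have hm : 0 < (m.+1%:R : R) by rewrite ltr0n.
have h := q_inv m.
have hM : 0 <= (m%:R : R) by rewrite ler0n.
have h0 : q m 0 ^+ 2 <= (m.+1%:R)^-1.
  rewrite -[(m.+1%:R)^-1]mul1r ler_pdivlMr // -natr1.
  have := sqr_ge0 (q m 1); nra.
have h1 : q m 1 ^+ 2 <= (m.+1%:R)^-1.
  rewrite -[(m.+1%:R)^-1]mul1r ler_pdivlMr // -natr1.
  have := sqr_ge0 (q m 0); nra.
suff : q m k%:Z ^+ 2 <= (m.+1%:R)^-1 /\ q m k.+1%:Z ^+ 2 <= (m.+1%:R)^-1 by case.
elim: k => [|k [IH1 IH2]]; first by split.
split => //; apply: le_trans IH1.
rewrite (_ : k.+2%:Z = k%:Z + 2); last by rewrite -addn2 PoszD.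
apply: lerXn2r; rewrite ?nnegrE ?q_ge0 //; exact: q_mono.
Qed.

Lemma q_bound m j : q m j ^+ 2 <= (m.+1%:R)^-1.
Proof.
case: j => k; first exact: q_bound_nat.
by rewrite -qN NegzE opprK q_bound_nat.
Qed.

End Q.

Lemma p0_q (R : realType) m (x : Z2) : p0 R m x = q R m (x.1 + x.2) * q R m (x.1 - x.2).
Proof.
elim: m x => [|m IH] [a b] /=.
  rewrite -natrM mulnb; congr (_%:R).
  rewrite /originZ2 xpair_eqE.
  by case: (a =P 0) => ? //=; case: (b =P 0) => ? //=; case: (a + b =P 0) => ? //=; case: (a - b =P 0) => ? //=; lia.
rewrite !IH /=.
rewrite (_ : a - 1 + b = (a + b) - 1); last by ring.
rewrite (_ : a - 1 - b = (a - b) - 1); last by ring.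
rewrite (_ : a + 1 + b = (a + b) + 1); last by ring.
rewrite (_ : a + 1 - b = (a - b) + 1); last by ring.
rewrite (_ : a + (b - 1) = (a + b) - 1); last by ring.
rewrite (_ : a - (b - 1) = (a - b) + 1); last by ring.
rewrite (_ : a + (b + 1) = (a + b) + 1); last by ring.
rewrite (_ : a - (b + 1) = (a - b) - 1); last by ring.
by field.
Qed.

Lemma p0_ge0 (R : realType) m x : 0 <= p0 R m x.
Proof. by rewrite p0_q mulr_ge0 // q_ge0. Qed.

Lemma p0_le (R : realType) m x : p0 R m x <= (m.+1%:R)^-1.
Proof.
rewrite p0_q.
have h1 := q_bound R m (x.1 + x.2). have h2 := q_bound R m (x.1 - x.2).
move: h1 h2; set u := q R m _; set v := q R m _ => h1 h2.
set c := (m.+1%:R)^-1 in h1 h2 *.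
have h3 : 0 <= (u - v) ^+ 2 := sqr_ge0 _.
have e : (u - v) ^+ 2 = u ^+ 2 + v ^+ 2 - 2 * (u * v) by ring.
lra.
Qed.


Section K.
Variable R : realType.
Local Open Scope ereal_scope.

Lemma esum_scale (T : choiceType) (S : set T) (k : R) (f : T -> \bar R) :
  (0 <= k)%R -> (forall i, 0 <= f i) ->
  \esum_(i in S) (k%:E * f i) <= k%:E * \esum_(i in S) f i.
Proof.
move=> k0 f0; apply: ge_ereal_sup => _ [X [finX XS] <-].
rewrite -ge0_mule_fsumr //; apply: lee_wpmul2l; first by rewrite lee_fin.
by apply: ereal_sup_ubound; exists X.
Qed.

Lemma subZ2_eq0 (w u : Z2) : (subZ2 w u == originZ2) = (w == u).
Proof.
case: w u => [a b] [c d]; rewrite /subZ2 /originZ2 /= !xpair_eqE !subr_eq0 //.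
Qed.

Lemma kernel (h : Z2 -> R) (G : nat -> Z2 -> R) :
  (forall w, 0 <= h w)%R -> (forall u, h u <= G 0%N u)%R ->
  (forall m u, ((G m (u.1 + 1, u.2) + G m (u.1 - 1, u.2) + G m (u.1, u.2 + 1)
       + G m (u.1, u.2 - 1)) / 4 <= G m.+1 u)%R) ->
  forall m u, \esum_(w in [set: Z2]) (p0 R m (subZ2 w u) * h w)%:E <= (G m u)%:E.
Proof.
move=> h0 hG0 hG; elim=> [|m IH] u.
  rewrite (esumID [set u]); last by move=> w _; rewrite lee_fin mulr_ge0 ?p0_ge0.
  rewrite [X in _ + X]esum1 ?adde0; last first.
    move=> w [_ /= wu]; rewrite subZ2_eq0 (_ : (w == u) = false) ?mul0r //; apply/negbTE/eqP; exact: wu.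
  rewrite setTI esum_set1; last by rewrite lee_fin mulr_ge0 ?p0_ge0.
  by rewrite /= subZ2_eq0 eqxx mul1r lee_fin.
set f := fun (v : Z2) (w : Z2) => (p0 R m (subZ2 w v) * h w)%:E.
have fge0 v w : 0 <= f v w by rewrite lee_fin mulr_ge0 ?p0_ge0.
rewrite (eq_esum (b := fun w => (4^-1)%R%:E * (f (u.1 + 1, u.2)%R w + f (u.1 - 1, u.2)%R w
    + f (u.1, u.2 + 1)%R w + f (u.1, u.2 - 1)%R w))); last first.
  move=> w _; rewrite /f -!EFinD -EFinM /=.
  have e1 : (((subZ2 w u).1 - 1, (subZ2 w u).2) = subZ2 w (u.1 + 1, u.2)%R)%R.
    by rewrite /subZ2 /=; congr (_, _); ring.
  have e2 : (((subZ2 w u).1 + 1, (subZ2 w u).2) = subZ2 w (u.1 - 1, u.2)%R)%R.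
    by rewrite /subZ2 /=; congr (_, _); ring.
  have e3 : (((subZ2 w u).1, (subZ2 w u).2 - 1) = subZ2 w (u.1, u.2 + 1)%R)%R.
    by rewrite /subZ2 /=; congr (_, _); ring.
  have e4 : (((subZ2 w u).1, (subZ2 w u).2 + 1) = subZ2 w (u.1, u.2 - 1)%R)%R.
    by rewrite /subZ2 /=; congr (_, _); ring.
  by rewrite e1 e2 e3 e4; congr (_%:E); ring.
apply: le_trans; first by apply: esum_scale => // w; rewrite !adde_ge0.
rewrite !esumD //; try by move=> w _; rewrite ?adde_ge0.
apply: (@le_trans _ _ ((4^-1)%R%:E * (G m (u.1 + 1, u.2)%R + G m (u.1 - 1, u.2)%R
   + G m (u.1, u.2 + 1)%R + G m (u.1, u.2 - 1)%R)%:E)).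
  apply: lee_wpmul2l; first by rewrite lee_fin invr_ge0.
  by rewrite !EFinD; repeat apply: leeD; apply: IH.
by rewrite -EFinM lee_fin mulrC.
Qed.

Definition Phi (c : R) (z : Z2) : R := (normZ2sq R z + c) ^+ 2.

Lemma normZ2sq_ge0 z : (0 <= normZ2sq R z)%R.
Proof. by rewrite /normZ2sq addr_ge0 // sqr_ge0. Qed.

Lemma K2 m u : \esum_(y in [set: Z2]) (normZ2sq R y * p0 R m (subZ2 y u))%:E
   <= (normZ2sq R u + m%:R)%:E.
Proof.
rewrite (eq_esum (b := fun y => (p0 R m (subZ2 y u) * normZ2sq R y)%:E)); last first.
  by move=> y _; rewrite mulrC.
apply: (@kernel _ (fun m u => normZ2sq R u + m%:R)%R).
- exact: normZ2sq_ge0.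
- by move=> v; rewrite addr0.
- move=> k [a b]; rewrite /normZ2sq /= !intrD ?mulrN1z ?mulr1z -[k.+1%:R]natr1.
  set A := (a%:~R : R); set B := (b%:~R : R); set K := (k%:R : R).
  rewrite (_ : (A + -1 = A - 1)%R) // (_ : (B + -1 = B - 1)%R) //.
  have -> : (((A + 1) ^+ 2 + B ^+ 2 + K + ((A - 1) ^+ 2 + B ^+ 2 + K) +
     (A ^+ 2 + (B + 1) ^+ 2 + K) + (A ^+ 2 + (B - 1) ^+ 2 + K)) / 4 =
     A ^+ 2 + B ^+ 2 + (K + 1))%R by field.
  by [].
Qed.

Lemma K1 (c : R) m u : (0 <= c)%R ->
  \esum_(w in [set: Z2]) (p0 R m (subZ2 w u) * Phi c w)%:E
   <= (Phi (c + 2 * m%:R) u)%:E.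
Proof.
move=> c0.
apply: (@kernel _ (fun m u => Phi (c + 2 * m%:R) u)%R).
- by move=> w; rewrite /Phi sqr_ge0.
- by move=> v; rewrite mulr0 addr0.
- move=> k [a b]; rewrite /Phi /normZ2sq /= !intrD ?mulrN1z ?mulr1z -[k.+1%:R]natr1.
  set A := (a%:~R : R); set B := (b%:~R : R); set K := (k%:R : R).
  rewrite (_ : (A + -1 = A - 1)%R) // (_ : (B + -1 = B - 1)%R) //.
  have hK : (0 <= K)%R by rewrite ler0n.
  set C := (c + 2 * K)%R.
  have -> : (c + 2 * (K + 1) = C + 2)%R by rewrite /C; ring.
  have -> : ((((A + 1) ^+ 2 + B ^+ 2 + C) ^+ 2 + ((A - 1) ^+ 2 + B ^+ 2 + C) ^+ 2 +
     (A ^+ 2 + (B + 1) ^+ 2 + C) ^+ 2 + (A ^+ 2 + (B - 1) ^+ 2 + C) ^+ 2) / 4 =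
     (A ^+ 2 + B ^+ 2 + (C + 2)) ^+ 2 - (2 * C + 3))%R by field.
  rewrite lerBlDr lerDl; rewrite /C; lra.
Qed.
End K.


Section Path.
Variable R : realType.
Local Open Scope ereal_scope.

Definition ext n (x' : {ffun 'I_n.+1 -> Z2}) (w : Z2) : {ffun 'I_n.+2 -> Z2} :=
  [ffun j : 'I_n.+2 => if (j < n.+1)%N then x' (inord j) else w].

Arguments ext {n}.

Lemma ext_lt n (x' : {ffun 'I_n.+1 -> Z2}) w k : (k < n.+1)%N -> ext x' w (inord k) = x' (inord k).
Proof. by move=> hk; rewrite ffunE inordK ?hk // ltnS ltnW. Qed.

Lemma ext_max n (x' : {ffun 'I_n.+1 -> Z2}) w : ext x' w ord_max = w.
Proof. by rewrite ffunE /= ltnn. Qed.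

Lemma inord_max n : (inord n : 'I_n.+1) = ord_max.
Proof. by apply: val_inj; rewrite /= inordK. Qed.

Lemma ext_bij n z :
  set_bij ([set x : {ffun 'I_n.+1 -> Z2} | x ord0 = z] `*`` (fun _ => [set: Z2]))
          [set x : {ffun 'I_n.+2 -> Z2} | x ord0 = z] (fun p => ext p.1 p.2).
Proof.
split.
- move=> [x' w] [/= hx _] /=; rewrite -[ord0](@inord_val n.+1) /=.
  by rewrite ext_lt // -hx; congr (x' _); apply: val_inj; rewrite /= inordK.
- move=> [x1 w1] [x2 w2] _ _ /= e.
  have hw : w1 = w2 by rewrite -(ext_max _ x1 w1) e ext_max.
  congr (_, _) => //; apply/ffunP => i.
  have := congr1 (fun f : {ffun 'I_n.+2 -> Z2} => f (inord i)) e => /=.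
  by rewrite !ext_lt // inord_val.
- move=> x /= hx.
  exists ([ffun i : 'I_n.+1 => x (inord i)], x ord_max).
    split => //=; rewrite ffunE -hx; congr (x _); apply: val_inj; rewrite /= inordK //.
  apply/ffunP => j; rewrite ffunE /=.
  case: ifPn => hj.
    by rewrite ffunE inordK // inord_val.
  congr (x _); apply: val_inj => /=.
  by have := ltn_ord j; rewrite ltnS leq_eqVlt (negPf hj) orbF => /eqP.
Qed.


Lemma path_bound (n : nat) (m : nat -> nat) (z : Z2) (c : R) : (0 <= c)%R ->
  \esum_(x in [set x : {ffun 'I_n.+1 -> Z2} | x ord0 = z])
    ((\prod_(k < n) p0 R (m k) (subZ2 (x (inord k.+1)) (x (inord k))))
      * Phi R c (x ord_max))%:E
  <= (Phi R (c + 2 * (\sum_(k < n) m k)%N%:R) z)%:E.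
Proof.
elim: n c z => [|n IH] c z c0.
  have -> : [set x : {ffun 'I_1 -> Z2} | x ord0 = z] = [set [ffun => z]].
    apply/seteqP; split => x /=.
      move=> hx; apply/ffunP => i; rewrite ffunE -hx; congr (x _).
      by apply: val_inj; case: i => [[]].
    by move=> ->; rewrite ffunE.
  rewrite esum_set1; last by rewrite lee_fin mulr_ge0 ?prodr_ge0 // => *;
    rewrite ?p0_ge0 // /Phi sqr_ge0 //.
  by rewrite big_ord0 ffunE mul1r big_ord0 mulr0 addr0.
rewrite (reindex_esum _ _ _ _ (ext_bij n z)).
set F := fun (x' : {ffun 'I_n.+1 -> Z2}) (w : Z2) =>
    ((\prod_(k < n.+1) p0 R (m k) (subZ2 (ext x' w (inord k.+1)) (ext x' w (inord k))))
      * Phi R c (ext x' w ord_max))%:E.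
rewrite -(esum_esum (a := F)); last first.
  move=> x' w _ _; rewrite lee_fin mulr_ge0 ?prodr_ge0 // => *;
    rewrite ?p0_ge0 // /Phi sqr_ge0 //.
set P := fun x' : {ffun 'I_n.+1 -> Z2} =>
   (\prod_(k < n) p0 R (m k) (subZ2 (x' (inord k.+1)) (x' (inord k))))%R.
have P0 x' : (0 <= P x')%R by rewrite prodr_ge0 // => *; rewrite p0_ge0.
apply: le_trans (_ : \esum_(x' in [set x : {ffun 'I_n.+1 -> Z2} | x ord0 = z])
   (P x' * Phi R (c + 2 * (m n)%:R) (x' ord_max))%:E <= _).
  apply: le_esum => x' _.
  rewrite (eq_esum (b := fun w => (P x')%:E * (p0 R (m n) (subZ2 w (x' ord_max)) * Phi R c w)%:E)); last first.
    move=> w _; rewrite /F -EFinM; congr (_%:E).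
    rewrite big_ord_recr ext_max -mulrA /P.
    apply: (f_equal2 (fun a b => a * b)%R); last apply: (f_equal2 (fun a b => a * b)%R) => //.
      apply: eq_bigr => k _; rewrite !ext_lt // ?ltnS ?(ltnW (ltn_ord k)) //.
      by rewrite /= ltn_ord.
    rewrite /= (_ : (inord n.+1 : 'I_n.+2) = ord_max); last by rewrite inord_max.
    by rewrite ext_max ext_lt // inord_max.
  apply: le_trans; first by apply: esum_scale => // w; rewrite lee_fin mulr_ge0 ?p0_ge0 // /Phi sqr_ge0.
  rewrite EFinM; apply: lee_wpmul2l; first by rewrite lee_fin.
  exact: K1.
apply: le_trans; first by apply: IH; rewrite addr_ge0 // mulr_ge0 // ler0n.
by rewrite big_ord_recr /= natrD mulrDr addrAC addrA.
Qed.
End Path.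


Lemma tele (i : nat -> nat) n : i 0%N = 0%N -> (forall k, (k < n)%N -> (i k < i k.+1)%N) ->
  (\sum_(k < n) (i k.+1 - i k))%N = i n.
Proof.
move=> i0; elim: n => [|n IH] h; first by rewrite big_ord0 i0.
rewrite big_ord_recr /= IH; last by move=> k hk; apply: h; rewrite ltnS ltnW.
have := h n (ltnSn n); lia.
Qed.

Lemma p0_sq_le (R : realType) (m : nat) x : (1 <= m)%N ->
  (p0 R m x ^+ 2 <= (m%:R)^-1 * p0 R m x)%R.
Proof.
move=> m1; rewrite expr2; apply: ler_wpM2r; first exact: p0_ge0.
apply: le_trans (p0_le R m x) _.
rewrite lef_pV2 ?posrE ?ltr0n // ?ler_nat //; lia.
Qed.

Theorem lemma22 (R : realType) :
  exists c2 : R, forall (N n : nat) (i : nat -> nat),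
    (1 <= N)%N -> (1 <= n)%N ->
    i 0%N = 0%N ->
    (forall k, (k < n)%N -> (i k < i k.+1)%N) ->
    (i n <= N)%N ->
    ((\esum_(x in [set x : {ffun 'I_n.+1 -> Z2} | x ord0 = originZ2])
       ((\prod_(k < n)
           (p0 R (i k.+1 - i k) (subZ2 (x (inord k.+1)) (x (inord k)))) ^+ 2)%:E
        * (\esum_(y in [set: Z2])
             (normZ2sq R y * p0 R (N - i n) (subZ2 y (x ord_max)))%:E)
        * (\esum_(y in [set: Z2])
             (normZ2sq R y * p0 R (N - i n) (subZ2 y (x ord_max)))%:E)))
    <= (c2 ^+ n * (N%:R) ^+ 2 * \prod_(k < n) ((i k.+1 - i k)%:R)^-1)%:E)%E.
Proof.
exists 8 => N n i N1 n1 i0 hi hN.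
set m := fun k => (i k.+1 - i k)%N.
set M := (N - i n)%N.
set Pc := (\prod_(k < n) ((m k)%:R)^-1 : R).
have Pc0 : (0 <= Pc)%R by apply: prodr_ge0 => k _; rewrite invr_ge0 ler0n.
set Q := fun x : {ffun 'I_n.+1 -> Z2} =>
  (\prod_(k < n) p0 R (m k) (subZ2 (x (inord k.+1)) (x (inord k))))%R.
have Q0 x : (0 <= Q x)%R by apply: prodr_ge0 => k _; rewrite p0_ge0.
apply: (@le_trans _ _ (\esum_(x in [set x : {ffun 'I_n.+1 -> Z2} | x ord0 = originZ2])
    (Pc%:E * (Q x * Phi R M%:R (x ord_max))%:E))%E).
  apply: le_esum => x _.
  have E2 := K2 R M (x ord_max).
  have Eg0 : (0 <= \esum_(y in [set: Z2]) (normZ2sq R y * p0 R M (subZ2 y (x ord_max)))%:E)%E.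
    by apply: esum_ge0 => y _; rewrite lee_fin mulr_ge0 ?p0_ge0 ?normZ2sq_ge0.
  apply: (@le_trans _ _ ((\prod_(k < n) p0 R (m k) (subZ2 (x (inord k.+1)) (x (inord k))) ^+ 2)%:E
     * (normZ2sq R (x ord_max) + M%:R)%:E * (normZ2sq R (x ord_max) + M%:R)%:E)%E).
    apply: lee_pmul => //; first by rewrite mule_ge0 // lee_fin prodr_ge0 // => k _; rewrite sqr_ge0.
    by apply: lee_pmul => //; rewrite lee_fin prodr_ge0 // => k _; rewrite sqr_ge0.
  rewrite -!EFinM lee_fin /Phi expr2 !mulrA; apply: ler_wpM2r.
    by rewrite addr_ge0 ?normZ2sq_ge0.
  apply: ler_wpM2r; first by rewrite addr_ge0 ?normZ2sq_ge0.
  rewrite /Pc /Q -big_split /=; apply: ler_prod => k _.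
  rewrite sqr_ge0 p0_sq_le //= /m; have := hi k (ltn_ord k); lia.
apply: le_trans; first by apply: esum_scale => // x; rewrite lee_fin mulr_ge0 // /Phi sqr_ge0.
apply: le_trans.
  apply: lee_wpmul2l; first by rewrite lee_fin.
  by apply: (@path_bound R n m); rewrite ler0n.
rewrite -EFinM lee_fin.
have hs : (\sum_(k < n) m k)%N = i n by apply: tele.
rewrite hs /Phi /normZ2sq /originZ2 /=.
rewrite (_ : 0%:~R ^+ 2 + 0%:~R ^+ 2 = 0 :> R); last by rewrite mulr0z expr2 mulr0 addr0.
rewrite add0r -(natrM _ 2) -natrD mulrC; apply: ler_wpM2r => //.
have h4 : (((M + 2 * i n)%N%:R : R) ^+ 2 <= 4 * N%:R ^+ 2)%R.
  rewrite (_ : (4 : R) = 2 ^+ 2); last by rewrite expr2; lra.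
  rewrite -exprMn -natrM; apply: lerXn2r; rewrite ?nnegrE ?ler0n // ler_nat /M; lia.
apply: le_trans h4 _; apply: ler_wpM2r; first by rewrite sqr_ge0.
clear -n1.
case: n n1 => // n _.
rewrite exprS; apply: (@le_trans _ _ (8 * 1)%R); first lra.
apply: ler_wpM2l; first lra.
by apply: exprn_ege1; lra.
Qed.
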